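(* Let $G$ be a simplicial group with $G_0=1$, let $\tilde G$ be its dummy, and let $p\colon\tilde G\to G$ be the simplicial homomorphism given in dimension $n$ by evaluation at $i_n=\mathrm{id}\colon[n]\to[n]\in B^n_n$. Then $p$ is surjective.
   Context: Let $B$ be the cosimplicial simplicial pointed set with $B^n_m$ the set of non-strictly increasing partial maps $b\colon[m]\dashrightarrow[n]$, marked element the map with empty domain; the simplicial structure in $m$ is by precomposition (domains pulled back) and the cosimplicial structure in $n$ by postcomposition. The dummy $\tilde G$ is the simplicial group with $\tilde G_n$ the group of base-point-preserving simplicial maps $B^n\to G$ (pointwise multiplication), structure homomorphisms induced by the cosimplicial structure of $B$. *)

(* Defs.v *)
From mathcomp Require Import all_boot.
Set Implicit Arguments. Unset Strict Implicit. Unset Printing Implicit Defensive.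

(* [n] = {0,...,n} is 'I_n.+1.  A map [m] -> [n] is a finite function. *)
Definition dmap (m n : nat) := {ffun 'I_m.+1 -> 'I_n.+1}.

Definition mono m n (f : dmap m n) : Prop :=
  forall i j : 'I_m.+1, i <= j -> f i <= f j.

Definition dcomp k m n (f : dmap m n) (g : dmap k m) : dmap k n :=
  [ffun i => f (g i)].

Definition did n : dmap n n := [ffun i => i].

Record sgroup := SGroup {
  sg_obj :> nat -> Type;
  sg_one : forall n, sg_obj n;
  sg_mul : forall n, sg_obj n -> sg_obj n -> sg_obj n;
  sg_inv : forall n, sg_obj n -> sg_obj n;
  sg_mulA : forall n (x y z : sg_obj n),
      sg_mul x (sg_mul y z) = sg_mul (sg_mul x y) z;
  sg_mul1 : forall n (x : sg_obj n), sg_mul (sg_one n) x = x;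
  sg_mulV : forall n (x : sg_obj n), sg_mul (sg_inv x) x = sg_one n;
  sg_act : forall m n, dmap m n -> sg_obj n -> sg_obj m;
  sg_act_id : forall n (x : sg_obj n), sg_act (did n) x = x;
  sg_act_comp : forall k m n (f : dmap m n) (g : dmap k m) (x : sg_obj n),
      mono f -> mono g -> sg_act (dcomp f g) x = sg_act g (sg_act f x);
  sg_act_mul : forall m n (f : dmap m n) (x y : sg_obj n),
      mono f -> sg_act f (sg_mul x y) = sg_mul (sg_act f x) (sg_act f y)
}.

(* B^n_m : partial maps [m] -/-> [n] (None = undefined), non-strictly
   increasing on their domain. *)
Definition pmap (n m : nat) := {ffun 'I_m.+1 -> option 'I_n.+1}.

Definition pmono n m (b : pmap n m) : Prop :=
  forall (i j : 'I_m.+1) (x y : 'I_n.+1),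
    i <= j -> b i = Some x -> b j = Some y -> x <= y.

Definition pprecomp n k m (b : pmap n m) (a : dmap k m) : pmap n k :=
  [ffun i => b (a i)].

Definition pempty n m : pmap n m := [ffun _ => None].

Definition pid n : pmap n n := [ffun i => Some i].

(* An element of the dummy  G~_n : a base-point-preserving simplicial map
   B^n -> G (values outside the pmono maps are irrelevant). *)
Record dummy (G : sgroup) (n : nat) := Dummy {
  dm_fun :> forall m, pmap n m -> G m;
  dm_nat : forall k m (a : dmap k m) (b : pmap n m),
      mono a -> pmono b -> dm_fun (pprecomp b a) = sg_act a (dm_fun b);
  dm_base : forall m, dm_fun (pempty n m) = sg_one G m
}.

Definition pev (G : sgroup) n (f : dummy G n) : G n := f n (pid n).

(* Main.v *)
Require Import Defs.
From mathcomp Require Import all_boot.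
From mathcomp Require Import zify.
Set Implicit Arguments. Unset Strict Implicit. Unset Printing Implicit Defensive.

Lemma sg_mulV_r (G : sgroup) m (x : G m) : sg_mul x (sg_inv x) = sg_one G m.
Proof.
rewrite -[sg_mul x _](sg_mul1) -{1}(sg_mulV (sg_inv x)).
by rewrite -sg_mulA [sg_mul (sg_inv x) (sg_mul x _)]sg_mulA sg_mulV sg_mul1 sg_mulV.
Qed.

Lemma sg_mul1r (G : sgroup) m (x : G m) : sg_mul x (sg_one G m) = x.
Proof. by rewrite -(sg_mulV x) sg_mulA sg_mulV_r sg_mul1. Qed.

Lemma sg_act1 (G : sgroup) k m (a : dmap k m) : mono a -> sg_act a (sg_one G m) = sg_one G k.
Proof.
move=> ma; have h := sg_act_mul (sg_one G m) (sg_one G m) ma.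
rewrite sg_mul1 in h.
have := congr1 (sg_mul (sg_inv (sg_act a (sg_one G m)))) h.
by rewrite sg_mulA sg_mulV sg_mul1.
Qed.

Lemma sg_actV (G : sgroup) k m (a : dmap k m) (x : G m) : mono a ->
  sg_act a (sg_inv x) = sg_inv (sg_act a x).
Proof.
move=> ma; have h := sg_act_mul (sg_inv x) x ma.
rewrite sg_mulV sg_act1 // in h.
have := congr1 (fun y => sg_mul y (sg_inv (sg_act a x))) h.
by rewrite sg_mul1 -sg_mulA sg_mulV_r sg_mul1r.
Qed.

Definition pw (G : sgroup) m (p q : bool) (x : G m) : G m :=
  if p then (if q then sg_one G m else sg_inv x) else (if q then x else sg_one G m).

Lemma pw_tele (G : sgroup) m p q r (x : G m) :
  sg_mul (pw p q x) (pw q r x) = pw p r x.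
Proof.
case: p; case: q; case: r => /=;
by rewrite ?sg_mul1 ?sg_mul1r ?sg_mulV ?sg_mulV_r.
Qed.

Lemma pw_act (G : sgroup) k m (a : dmap k m) p q (x : G m) : mono a ->
  sg_act a (pw p q x) = pw p q (sg_act a x).
Proof. by move=> ma; case: p; case: q => /=; rewrite ?sg_act1 ?sg_actV. Qed.

Fixpoint prodN (G : sgroup) m (f : nat -> G m) lo k : G m :=
  match k with 0 => sg_one G m | k'.+1 => sg_mul (prodN f lo k') (f (lo + k')) end.

Lemma prodN_split (G : sgroup) m (f : nat -> G m) lo k1 k2 :
  prodN f lo (k1 + k2) = sg_mul (prodN f lo k1) (prodN f (lo + k1) k2).
Proof.
elim: k2 => [|k IH] /=; first by rewrite addn0 sg_mul1r.
by rewrite addnS /= IH sg_mulA addnA.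
Qed.

Lemma prodN_ext (G : sgroup) m (f f' : nat -> G m) lo k :
  (forall i, i < k -> f (lo + i) = f' (lo + i)) -> prodN f lo k = prodN f' lo k.
Proof.
elim: k => [|k IH] h //=; rewrite IH ?h // => i hi; apply: h; exact: ltnW.
Qed.

Lemma prodN_act (G : sgroup) k m (a : dmap k m) (f : nat -> G m) lo K : mono a ->
  sg_act a (prodN f lo K) = prodN (fun t => sg_act a (f t)) lo K.
Proof.
move=> ma; elim: K => [|K IH] /=; first exact: sg_act1.
by rewrite sg_act_mul // IH.
Qed.

Lemma prodN_const (G : sgroup) m (E : nat -> bool) (x : G m) lo k :
  prodN (fun t => pw (E t) (E t.+1) x) lo k = pw (E lo) (E (lo + k)) x.
Proof.
elim: k => [|k IH] /=; first by rewrite addn0; case: (E lo).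
by rewrite IH pw_tele addnS.
Qed.

Lemma prodN_blocks (G : sgroup) m (E : nat -> bool) (X Y : nat -> G m)
  (al : nat -> nat) K :
  (forall s, s < K -> al s <= al s.+1) ->
  (forall s t, s < K -> al s <= t < al s.+1 -> X t = Y s) ->
  al 0 <= al K /\
  prodN (fun t => pw (E t) (E t.+1) (X t)) (al 0) (al K - al 0) =
  prodN (fun s => pw (E (al s)) (E (al s.+1)) (Y s)) 0 K.
Proof.
elim: K => [|K IH] hmon hXY; first by rewrite subnn.
have [h0 IH'] := IH (fun s hs => hmon s (ltnW hs)) (fun s t hs => hXY s t (ltnW hs)).
have hK := hmon K (ltnSn K).
split; first exact: leq_trans h0 hK.
have -> : al K.+1 - al 0 = (al K - al 0) + (al K.+1 - al K).
  lia.
rewrite prodN_split IH' /= subnKC // add0n.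
congr sg_mul.
rewrite (prodN_ext (f' := fun t => pw (E t) (E t.+1) (Y K))).
  by rewrite prodN_const subnKC.
move=> i hi; rewrite (hXY K) //; apply/andP; split; lia.
Qed.

Lemma prodN_single (G : sgroup) m (E : nat -> bool) (f : nat -> G m) t0 N :
  (forall t, t <= N -> E t = (t0 < t)) ->
  prodN (fun t => pw (E t) (E t.+1) (f t)) 0 N = if t0 < N then f t0 else sg_one G m.
Proof.
elim: N => [|N IH] hE /=; first by [].

rewrite IH; last by move=> t ht; apply: hE; exact: ltnW.
rewrite add0n !hE // ?leqnSn //.
case: (ltngtP t0 N) => h.
- have h1 : t0 < N.+1 by lia.
  by rewrite h1 /= sg_mul1r.
- have h1 : (t0 < N.+1) = false by lia.
  by rewrite h1 /= sg_mul1.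
- by subst t0; rewrite ltnSn /= sg_mul1.
Qed.

Arguments prodN : simpl never.

Definition ev n m (b : Defs.pmap n m) (j i : nat) : bool :=
  match b (inord i) with Some x => j <= x | None => false end.
Definition EE n m (b : Defs.pmap n m) j s :=
  if s is s'.+1 then (if s' <= m then ev b j s' else true) else false.
Definition Hmap n m (pre : seq nat) : dmap m n :=
  [ffun i : 'I_m.+1 => inord (count (fun t => t <= i) pre)].

Fixpoint PP (G : sgroup) n (g : G n) m (b : Defs.pmap n m) (r : nat) (pre : seq nat) : G m :=
  match r with
  | 0 => sg_act (Hmap n m pre) g
  | r'.+1 => prodN (fun t => pw (EE b (size pre).+1 t) (EE b (size pre).+1 t.+1)
                               (PP g b r' (rcons pre t))) 0 m.+2
  end.

Lemma Hmap_mono n m pre : size pre <= n -> mono (Hmap n m pre).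
Proof.
move=> hs i j hij; rewrite !ffunE !inordK; last first.
- by rewrite ltnS (leq_trans (count_size _ _)).
- by rewrite ltnS (leq_trans (count_size _ _)).
apply: sub_count => t /= ht; exact: leq_trans ht hij.
Qed.

Definition tau k m (a : dmap k m) (t : nat) :=
  find (fun s => t <= a (inord s)) (iota 0 k.+1).

Lemma tau_size k m (a : dmap k m) t : tau a t <= k.+1.
Proof. by have := find_size (fun s => t <= a (inord s)) (iota 0 k.+1); rewrite size_iota. Qed.

Lemma tau_le k m (a : dmap k m) : mono a ->
  forall (i : 'I_k.+1) t, (tau a t <= i) = (t <= a i).
Proof.
move=> ma i t; apply/idP/idP => h.
- have hlt : tau a t < k.+1 by rewrite (leq_ltn_trans h).
  have hh : has (fun s => t <= a (inord s)) (iota 0 k.+1) by rewrite has_find size_iota.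
  have := nth_find 0 hh.
  rewrite nth_iota //.
  rewrite add0n => h2; apply: leq_trans h2 _; apply: ma.
  by rewrite inordK // (leq_ltn_trans h).
- rewrite leqNgt; apply/negP => hlt.
  have := before_find 0 hlt.
  by rewrite nth_iota // add0n inord_val h.
Qed.

Definition al k m (a : dmap k m) (s : nat) :=
  if s is s'.+1 then (if s' <= k then (a (inord s')).+1 else m.+2) else 0.

Lemma al_mon k m (a : dmap k m) : mono a -> forall s, s < k.+2 -> al a s <= al a s.+1.
Proof.
move=> ma [|s] hs //=.
have hsk : s <= k by lia.
rewrite hsk; case: ifP => h.
- rewrite ltnS; apply: ma; rewrite !inordK //; lia.
- have := ltn_ord (a (inord s)); lia.
Qed.

Lemma al_tau k m (a : dmap k m) : mono a ->
  forall s t, s < k.+2 -> al a s <= t < al a s.+1 -> tau a t = s.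
Proof.
move=> ma s t hs /andP [h1 h2].
apply/eqP; rewrite eqn_leq; apply/andP; split.
- case: s hs h1 h2 => [|s] hs h1 h2 /=.
  + have := tau_le ma (inord 0) t; rewrite inordK // => ->.
    by move: h2.
  + move: h2 => /=; case: ifP => hk h2.
    * have := tau_le ma (inord s.+1) t; rewrite inordK; last by lia.
      by move=> ->; rewrite -ltnS.
    * apply: leq_trans (tau_size a t) _; lia.
- case: s hs h1 h2 => [|s] hs h1 h2 //=.
  have hsk : s <= k by lia.
  move: h1 => /=; rewrite hsk => h1.
  have := tau_le ma (inord s) t; rewrite inordK; last by lia.
  move=> h; rewrite ltnNge h -ltnNge //.
Qed.

Lemma EE_al n k m (a : dmap k m) (b : Defs.pmap n m) j : mono a ->
  forall s, s <= k.+2 -> EE b j (al a s) = EE (pprecomp b a) j s.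
Proof.
move=> ma [|s] hs //=.
case: ifP => hsk /=.
- rewrite -ltnS ltn_ord /ev ffunE inord_val //.
- by rewrite ltnn.
Qed.

Lemma PP_nat (G : sgroup) n (g : G n) k m (a : dmap k m) (b : Defs.pmap n m) :
  mono a -> forall r pre, size pre + r = n ->
  sg_act a (PP g b r pre) = PP g (pprecomp b a) r (map (tau a) pre).
Proof.
move=> ma; elim=> [|r IH] pre hs /=.
- rewrite addn0 in hs.
  rewrite -sg_act_comp //; last by apply: Hmap_mono; rewrite hs.
  congr sg_act; apply/ffunP => i; rewrite !ffunE /=; congr inord.
  rewrite count_map; apply: eq_count => t /=.
  by rewrite (tau_le ma).
- rewrite prodN_act //.
  rewrite (prodN_ext (f' := fun t => pw (EE b (size pre).+1 t) (EE b (size pre).+1 t.+1)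
      (PP g (pprecomp b a) r (rcons (map (tau a) pre) (tau a t))))); last first.
    move=> i _; rewrite pw_act // IH ?map_rcons // size_rcons; lia.
  have [_ hb] := @prodN_blocks G k (EE b (size pre).+1)
      (fun t => PP g (pprecomp b a) r (rcons (map (tau a) pre) (tau a t)))
      (fun s => PP g (pprecomp b a) r (rcons (map (tau a) pre) s))
      (al a) k.+2
      (al_mon ma) (fun s t hs ht => ltac:(by cbv beta; rewrite (al_tau ma hs ht))).
  have e1 : al a k.+2 = m.+2 by rewrite /al ltnn.
  move: hb; rewrite e1 /= subn0 => ->.
  rewrite size_map; apply: prodN_ext => i hi.
  have h2 := @EE_al n k m a b (size pre).+1 ma i.+1 hi.
  rewrite /= in h2; rewrite add0n h2 EE_al //; lia.
Qed.

Lemma PP_empty (G : sgroup) n (g : G n) m : forall r pre,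
  PP g (pempty n m) r pre = sg_act (Hmap n m (pre ++ nseq r m.+1)) g.
Proof.
elim=> [|r IH] pre; first by rewrite cats0.
rewrite /= (@prodN_single _ _ _ _ m.+1 m.+2); last first.
  move=> [|t] ht //=; case: ifP => h; last by rewrite ltnS; lia.
  by rewrite /ev ffunE; symmetry; rewrite ltnS; lia.
by rewrite ltnSn IH cat_rcons.
Qed.

Lemma count_iota_le i : forall l s,
  count (fun t => t <= i) (iota s l) = minn (i.+1 - s) l.
Proof.
elim=> [|l IH] s /=; first by rewrite minn0.
rewrite IH; case: (leqP s i) => h /=; lia.
Qed.

Lemma PP_id (G : sgroup) n (g : G n) : forall r pre, size pre + r = n ->
  PP g (pid n) r pre = sg_act (Hmap n n (pre ++ iota (size pre).+1 r)) g.
Proof.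
elim=> [|r IH] pre hs; first by rewrite cats0.
rewrite /= (@prodN_single _ _ _ _ (size pre).+1 n.+2); last first.
  move=> [|t] ht //=; case: ifP => h; last by lia.
  rewrite /ev ffunE inordK //; lia.
have -> : (size pre).+1 < n.+2 by lia.
rewrite IH; last by rewrite size_rcons; lia.
by rewrite cat_rcons size_rcons.
Qed.

Lemma Hmap_iota n : Hmap n n (iota 1 n) = did n.
Proof.
apply/ffunP => i; rewrite !ffunE; apply: val_inj => /=.
rewrite count_iota_le inordK; have := ltn_ord i; lia.
Qed.

Lemma act_const0 (G : sgroup) n (g : G n) m :
  (forall x : G 0, x = sg_one G 0) ->
  sg_act (Hmap n m (nseq n m.+1)) g = sg_one G m.
Proof.
move=> h0.
have -> : Hmap n m (nseq n m.+1) =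
   dcomp ([ffun _ => ord0] : dmap 0 n) ([ffun _ => ord0] : dmap m 0).
  apply/ffunP => i; rewrite !ffunE; apply: val_inj => /=.
  rewrite count_nseq /=.
  have -> : (m < i) = false by have := ltn_ord i; lia.
  by rewrite mul0n inordK.
rewrite sg_act_comp; first by rewrite (h0 (sg_act _ g)) sg_act1 // => i j _; rewrite !ffunE.
- by move=> i j _; rewrite !ffunE.
- by move=> i j _; rewrite !ffunE.
Qed.

Theorem mainTheorem11 (G : sgroup) :
  (forall x : G 0, x = sg_one G 0) ->
  forall (n : nat) (g : G n), exists f : dummy G n, pev f = g.
Proof.
move=> h0 n g.
have hnat : forall (k m : nat) (a : dmap k m) (b : Defs.pmap n m),
    mono a -> pmono b ->
    PP g (pprecomp b a) n [::] = sg_act a (PP g b n [::]).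
  by move=> k m a b ma _; rewrite (PP_nat g b ma) //.
have hbase : forall m, PP g (pempty n m) n [::] = sg_one G m.
  by move=> m; rewrite PP_empty act_const0.
exists (Dummy hnat hbase).
rewrite /pev /= PP_id // Hmap_iota; exact: sg_act_id.
Qed.
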